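(* Let $k\ge2$, $n\ge0$, $T\in\mathcal{T}^k_n$ and $\pi=\phi(T)$. Then $\operatorname{asc}(\pi)=\operatorname{casc}(T)$, $\operatorname{des}(\pi)=\operatorname{cdes}(T)$ and $\operatorname{plat}(\pi)=\operatorname{emp}(T)$.
   Context: For $k\ge2$, $\mathcal{T}^k_n$ is the set of plane rooted trees with $n$ edges labeled bijectively by $\{1,\dots,n\}$, in which every non-root vertex has $k-2$ unlabeled half-edges separating its children into $k-1$ ordered, possibly empty, compartments (the root has no half-edges). For a non-root vertex $c$ with parent-edge label $\ell$, set $W(c)=\ell\,U_1\,\ell\,U_2\,\ell\cdots\ell\,U_{k-1}\,\ell$, where $U_j$ is the concatenation of $W(c')$ over the children $c'$ in the $j$-th compartment of $c$, left to right; $\phi(T)$ is the concatenation of $W(c)$ over the root's children, left to right. For a sequence $\pi_1\cdots\pi_r$: $i\in\{1,\dots,r\}$ is a descent if $\pi_i>\pi_{i+1}$ or $i=r$; $i\in\{0,\dots,r-1\}$ is an ascent if $i=0$ or $\pi_i<\pi_{i+1}$; $i\in\{1,\dots,r-1\}$ is a plateau if $\pi_i=\pi_{i+1}$; $\operatorname{des},\operatorname{asc},\operatorname{plat}$ count these. Cyclic counts: $\operatorname{cdes}(\pi)=|\{i\in\{1,\dots,r\}:\pi_i>\pi_{i+1}\}|$ and $\operatorname{casc}(\pi)=|\{i\in\{1,\dots,r\}:\pi_i<\pi_{i+1}\}|$, with $\pi_{r+1}=\pi_1$. For a non-root vertex $v$ with parent-edge label $\ell$ and children-edge labels $a_{j,1},\dots,a_{j,d_j}$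 (left to right) in compartment $j$, set $\operatorname{cdes}(v)=\operatorname{cdes}(\ell a_{1,1}\cdots a_{1,d_1}\ell a_{2,1}\cdots a_{2,d_2}\ell\cdots\ell a_{k-1,1}\cdots a_{k-1,d_{k-1}})$ and $\operatorname{casc}(v)$ likewise with $\operatorname{casc}$. For the root with children-edge labels $a_1,\dots,a_d$ left to right, $\operatorname{cdes}(v)=\operatorname{des}(a_1\cdots a_d)$ and $\operatorname{casc}(v)=\operatorname{asc}(a_1\cdots a_d)$. Then $\operatorname{cdes}(T)=\sum_v\operatorname{cdes}(v)$, $\operatorname{casc}(T)=\sum_v\operatorname{casc}(v)$, and $\operatorname{emp}(T)$ is the total number of empty compartments over all non-root vertices. *)

(* Defs.v *)
From mathcomp Require Import all_boot.
Set Implicit Arguments. Unset Strict Implicit. Unset Printing Implicit Defensive.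

(* A non-root vertex: the label of its parent edge, and its list of
   compartments (ordered), each compartment being the ordered list of the
   children (subtrees) it contains.  The k-2 half-edges separate the children
   into k-1 compartments, so a well-formed vertex has exactly k-1 compartments. *)
Inductive vtx : Type := Node of nat & seq (seq vtx).

Definition vlabel (v : vtx) : nat := let: Node l _ := v in l.

(* A plane rooted tree: the ordered list of the root's children subtrees. *)
Definition tree := seq vtx.

Fixpoint wfk (k : nat) (v : vtx) : bool :=
  let: Node _ cs := v in
  (size cs == k.-1) && all (fun U => all (wfk k) U) cs.

Fixpoint labels (v : vtx) : seq nat :=
  let: Node l cs := v in l :: flatten (map (fun U => flatten (map labels U)) cs).

Definition in_Tkn (k n : nat) (T : tree) : bool :=
  all (wfk k) T && perm_eq (flatten (map labels T)) (iota 1 n).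

Fixpoint W (v : vtx) : seq nat :=
  let: Node l cs := v in
  l :: flatten (map (fun U => flatten (map W U) ++ [:: l]) cs).

Definition phi (T : tree) : seq nat := flatten (map W T).

Definition cpairs (s : seq nat) : seq (nat * nat) := zip s (behead s).
Definition cycpairs (s : seq nat) : seq (nat * nat) := zip s (rot 1 s).

(* des: i in {1..r} with pi_i > pi_{i+1} or i = r *)
Definition des (s : seq nat) : nat :=
  count (fun p => p.1 > p.2) (cpairs s) + (size s > 0).
(* asc: i in {0..r-1} with i = 0 or pi_i < pi_{i+1} *)
Definition asc (s : seq nat) : nat :=
  (size s > 0) + count (fun p => p.1 < p.2) (cpairs s).
Definition plat (s : seq nat) : nat :=
  count (fun p => p.1 == p.2) (cpairs s).

Definition cdes (s : seq nat) : nat := count (fun p => p.1 > p.2) (cycpairs s).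
Definition casc (s : seq nat) : nat := count (fun p => p.1 < p.2) (cycpairs s).

Definition vword (v : vtx) : seq nat :=
  let: Node l cs := v in flatten (map (fun U => l :: map vlabel U) cs).

Fixpoint cdes_v (v : vtx) : nat :=
  let: Node _ cs := v in
  cdes (vword v) + sumn (map (fun U => sumn (map cdes_v U)) cs).

Fixpoint casc_v (v : vtx) : nat :=
  let: Node _ cs := v in
  casc (vword v) + sumn (map (fun U => sumn (map casc_v U)) cs).

Fixpoint emp_v (v : vtx) : nat :=
  let: Node _ cs := v in
  count (fun U : seq vtx => nilp U) cs + sumn (map (fun U => sumn (map emp_v U)) cs).

Definition cdesT (T : tree) : nat := des (map vlabel T) + sumn (map cdes_v T).
Definition cascT (T : tree) : nat := asc (map vlabel T) + sumn (map casc_v T).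
Definition empT (T : tree) : nat := sumn (map emp_v T).

(* Main.v *)
Require Import Defs.
From mathcomp Require Import all_boot.
From mathcomp Require Import zify.

Definition vtx_ind' (P : vtx -> Prop)
  (H : forall l cs, List.Forall (List.Forall P) cs -> P (Node l cs)) : forall v, P v :=
  fix F v := match v with Node l cs => H l cs
   ((fix G cs : List.Forall (List.Forall P) cs := match cs with
      | [::] => List.Forall_nil _
      | U :: cs' => List.Forall_cons U
          ((fix G2 U : List.Forall P U := match U with
             | [::] => List.Forall_nil _
             | c :: U' => List.Forall_cons c (F c) (G2 U') end) U) (G cs') end) cs) end.

Definition cnt (P : pred (nat * nat)) s := count P (cpairs s).

Lemma cnt_cons2 P x y s : cnt P (x :: y :: s) = P (x, y) + cnt P (y :: s).
Proof. by []. Qed.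

Lemma cnt1 P x : cnt P [:: x] = 0.
Proof. by []. Qed.

Lemma cnt_cat P x s y t :
  cnt P ((x :: s) ++ (y :: t)) = cnt P (x :: s) + P (last x s, y) + cnt P (y :: t).
Proof.
elim: s x => [|z s IH] x /=; first by rewrite cnt_cons2 cnt1 add0n.
rewrite cnt_cons2 (IH z) cnt_cons2 /=; lia.
Qed.

Definition good (w : seq nat) := (w != [::]) && (head 0 w == last 0 w).

Lemma cnt_flatten P ws : all good ws ->
  cnt P (flatten ws) = sumn (map (cnt P) ws) + cnt P (map (head 0) ws).
Proof.
elim: ws => [|w ws IH] //= /andP [Hw Hws].
case: ws IH Hws => [|w' ws'] IH Hws.
  by rewrite /= cats0 cnt1 !addn0.
move: Hw; case: w => [|x s] // /andP [_ /eqP /= Hx].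
have := Hws => /= /andP [Hw' _]; move: Hw'.
case: w' IH Hws => [|y s'] // IH Hws _.
rewrite /= -/(flatten _) in IH *.
rewrite -cat_cons (cnt_cat _ x s y (s' ++ flatten ws')).
rewrite -cat_cons (IH Hws) /= cnt_cons2 -Hx /=; lia.
Qed.

Lemma last_blocks l (A : seq vtx -> seq nat) cs :
  last l (flatten (map (fun U => A U ++ [:: l]) cs)) = l.
Proof. elim: cs => //= U cs IH; by rewrite !last_cat /= IH. Qed.

Lemma W_good v : good (W v) /\ head 0 (W v) = vlabel v.
Proof. case: v => l cs; rewrite /good /= last_blocks eqxx; by split. Qed.

Lemma W_blocks l cs : W (Node l cs) =
  flatten ([:: l] :: flatten (map (fun U => rcons (map W U) [:: l]) cs)).
Proof.
rewrite /=; congr (_ :: _); elim: cs => //= U cs IH.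
by rewrite IH flatten_cat -cats1 flatten_cat /=.
Qed.

Lemma key_vword l (g : seq vtx -> seq nat) cs :
  l :: flatten (map (fun U => rcons (g U) l) cs) =
  rcons (flatten (map (fun U => l :: g U) cs)) l.
Proof.
elim: cs => //= U cs IH.
by rewrite -cats1 -catA /= IH rcons_cat.
Qed.

Lemma zip_rcons_l (s : seq nat) y (t : seq nat) : size s = size t -> zip (rcons s y) t = zip s t.
Proof. by elim: s t => [|a s IH] [|b t] //= [/IH ->]. Qed.

Lemma cyc_rcons P x t : cnt P (rcons (x :: t) x) = count P (cycpairs (x :: t)).
Proof.
rewrite /cnt /cpairs /cycpairs rot1_cons.
have -> : behead (rcons (x :: t) x) = rcons t x by [].
by rewrite zip_rcons_l // size_rcons.
Qed.

Lemma W_cnt P l cs : cnt P (W (Node l cs)) =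
  count P (cycpairs (vword (Node l cs))) +
  sumn (map (fun U => sumn (map (fun c => cnt P (W c)) U)) cs).
Proof.
rewrite W_blocks cnt_flatten; last first.
  rewrite /= {1}/good /= eqxx /=; elim: cs => //= U cs IH.
  rewrite all_cat IH all_rcons {1}/good /= eqxx /= andbT.
  by apply: all_mapT => c; case: (W_good c).
have -> : map (head 0) ([:: l] :: flatten (map (fun U => rcons (map W U) [:: l]) cs))
   = l :: flatten (map (fun U => rcons (map vlabel U) l) cs).
  rewrite /=; congr (_ :: _); elim: cs => //= U cs IH.
  rewrite map_cat IH map_rcons -map_comp; congr (rcons _ _ ++ _).
  by apply: eq_map => c /=; case: (W_good c).
rewrite key_vword addnC; congr (_ + _).
  case: cs => [|U cs] //=; by rewrite cyc_rcons.
rewrite /= cnt1 add0n; elim: cs => //= U cs IH.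
by rewrite map_cat sumn_cat IH map_rcons sumn_rcons cnt1 addn0 -map_comp.
Qed.

Lemma stat_W P (f : vtx -> nat) :
  (forall l cs, f (Node l cs) = count P (cycpairs (vword (Node l cs))) +
      sumn (map (fun U => sumn (map f U)) cs)) ->
  forall v, f v = cnt P (W v).
Proof.
move=> Hf; apply: vtx_ind' => l cs Hcs.
rewrite Hf W_cnt; congr (_ + _); congr sumn.
elim: Hcs => //= U cs' HU _ ->; congr (_ :: _); congr sumn.
by elim: HU => //= c U' -> _ ->.
Qed.

Definition eqp : pred (nat * nat) := fun p => p.1 == p.2.

Lemma cnt_eq_uniq s : uniq s -> cnt eqp s = 0.
Proof.
elim: s => // x [|y t] IH //= /andP [Hx Hu].
rewrite cnt_cons2 (IH Hu) addn0 /eqp /=.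
suff -> : (x == y) = false by [].
by apply/negbTE; apply: contra Hx => /eqP ->; rewrite inE eqxx.
Qed.

Lemma plat_key l (ss : seq (seq nat)) : uniq (l :: flatten ss) ->
  cnt eqp (l :: flatten (map (fun s => rcons s l) ss)) = count (@nilp nat) ss.
Proof.
elim: ss => //= s ss IH /andP [Hl Hu].
rewrite mem_cat negb_or in Hl; case/andP: Hl => Hls HlF.
rewrite cat_uniq in Hu; case/and3P: Hu => Hs _ HF.
rewrite -cats1 -catA /= -cat_cons (cnt_cat _ l s l) IH ?HlF //.
rewrite cnt_eq_uniq /= ?Hls // add0n /eqp /=; congr (_ + _).
case: s Hls {Hs} => [|y t] /= Hy; first by rewrite eqxx.
suff -> : (last y t == l) = false by [].
apply/negbTE; apply: contra Hy => /eqP <-; exact: mem_last.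
Qed.

Lemma subseq_vl U : subseq (map vlabel U) (flatten (map labels U)).
Proof.
elim: U => //= [[l cs] U IH] /=; rewrite eqxx.
by rewrite -[map vlabel U]cat0s cat_subseq ?sub0seq.
Qed.

Lemma subseq_vl2 cs : subseq (flatten (map (map vlabel) cs))
  (flatten (map (fun U => flatten (map labels U)) cs)).
Proof. elim: cs => //= U cs IH; by rewrite cat_subseq ?subseq_vl. Qed.

Lemma cyc_key P l (g : seq vtx -> seq nat) cs :
  count P (cycpairs (flatten (map (fun U => l :: g U) cs))) =
  cnt P (l :: flatten (map (fun U => rcons (g U) l) cs)).
Proof. rewrite key_vword; case: cs => [|U cs] //=; by rewrite cyc_rcons. Qed.

Lemma emp_W v : uniq (labels v) -> emp_v v = cnt eqp (W v).
Proof.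
move: v; apply: vtx_ind' => l cs Hcs Hu.
rewrite W_cnt /=; congr (_ + _).
  rewrite cyc_key.
  have -> : count (fun U : seq vtx => nilp U) cs = count (@nilp nat) (map (map vlabel) cs).
    by rewrite count_map; apply: eq_count => U /=; rewrite /nilp size_map.
  have -> : flatten (map (fun U => rcons (map vlabel U) l) cs) =
            flatten (map (fun s => rcons s l) (map (map vlabel) cs)) by rewrite -map_comp.
  rewrite plat_key //.
  apply: subseq_uniq Hu; by rewrite /= eqxx subseq_vl2.
move: Hu => /= /andP [_]; elim: Hcs => //= U cs' HU _ IH.
rewrite cat_uniq => /and3P [HU1 _ Hrest]; rewrite IH //; congr (_ + _).
elim: HU HU1 => //= c U' Hc _ IH2; rewrite cat_uniq => /and3P [H1 _ H2].
by rewrite Hc // IH2.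
Qed.

Theorem lemma4p5 (k n : nat) (T : tree) :
  2 <= k -> in_Tkn k n T ->
  [/\ asc (phi T) = cascT T, des (phi T) = cdesT T & plat (phi T) = empT T].
Proof.
move=> _ /andP [_ Hp].
have Hu : uniq (flatten (map labels T)) by rewrite (perm_uniq Hp) iota_uniq.
have Hphi : forall P, cnt P (phi T) = sumn (map (fun c => cnt P (W c)) T) + cnt P (map vlabel T).
  move=> P; rewrite /phi cnt_flatten; last by apply: all_mapT => c; case: (W_good c).
  rewrite -!map_comp; congr (_ + _); congr (cnt P _); apply: eq_map => c /=.
  by case: (W_good c).
have Hsz : (0 < size (phi T)) = (0 < size (map vlabel T)).
  by case: T {Hp Hu Hphi} => [|[l cs] T'].
have Hca : forall v, casc_v v = cnt (fun p => p.1 < p.2) (W v).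
  by apply: stat_W => l cs.
have Hcd : forall v, cdes_v v = cnt (fun p => p.1 > p.2) (W v).
  by apply: stat_W => l cs.
split.
- rewrite /asc /cascT /asc -/(cnt _ _) -/(cnt _ (map vlabel T)) Hphi Hsz.
  rewrite (eq_map Hca); lia.
- rewrite /des /cdesT /des -/(cnt _ _) -/(cnt _ (map vlabel T)) Hphi Hsz.
  rewrite (eq_map Hcd); lia.
- rewrite /plat /empT -/(cnt _ _).
  have -> : (fun p : nat * nat => p.1 == p.2) = eqp by [].
  rewrite Hphi cnt_eq_uniq ?(subseq_uniq (subseq_vl T)) // addn0.
  elim: T {Hp Hphi Hsz} Hu => //= c T IH; rewrite cat_uniq => /and3P [H1 _ H2].
  by rewrite IH // emp_W.
Qed.
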